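(* Let $k$ be an algebraically closed field, $Q'$ a finite acyclic quiver, and $Q$ the subquiver with $Q_0 = Q'_0$ and $Q'_1 = Q_1 \cup \{e'\}$, $e' \notin Q_1$; write $s = s(e')$, $t = t(e')$. Let $M' = (M_v, \varphi_a)_{v \in Q'_0, a \in Q'_1}$ be a representation of $Q'$ over $k$ of total dimension $n = \sum_v \dim M_v$ which is a brick, and such that $\varphi_{e'}: M_s \to M_t$ is not of full rank. Let $M = (M_v, \varphi_a)_{v \in Q_0, a \in Q_1}$ be its restriction to $Q$. Choose complements $M_s = \mathrm{Ker}\,\varphi_{e'} \oplus M'_s$ and $M_t = \mathrm{Im}\,\varphi_{e'} \oplus M'_t$, so that, in block form with respect to these decompositions, $$\varphi_{e'} = \begin{pmatrix} 0 & \varphi \\ 0 & 0\end{pmatrix}$$ with $\varphi: M'_s \to \mathrm{Im}\,\varphi_{e'}$. Fix a basis of $\bigoplus_v M_v$ adapted to these decompositions, with the basis of $M_s$ first, then that of $M_t$, then the remaining vertex spaces, and let $f_0: kQ \to M_n(k)$ be the resulting homomorphism giving the action of $kQ$ on $M$ (so $f_0(e_s)$ and $f_0(e_t)$ are the block-diagonal idempotents $\mathrm{diag}(I_{\dim M_s},0,0)$ and $\mathrm{diag}(0,I_{\dim M_t},0)$). Assume that $\mathrm{Ker}\,\varphi_{e'}$ and $\mathrm{Im}\,\varphi_{e'}$ are invariant under the components at $s$ and $t$, respectively, of every endomorphism of the representation $M$ of $Q$. Then there is a ring epimorphism $f: kQ' \to M_n(k\langle X\rangle)$ which agrees with $f_0$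 on $kQ$ (composed with $M_n(k) \subseteq M_n(k\langle X \rangle)$) and sends $e'$ to the block matrix having $f_{e'}$ in the (rows of $M_t$, columns of $M_s$) block and $0$ elsewhere, where $f_{e'}$, written in block form with respect to $M_s = \mathrm{Ker}\,\varphi_{e'}\oplus M'_s$ and $M_t = \mathrm{Im}\,\varphi_{e'}\oplus M'_t$, is: (i) $f_{e'} = \begin{pmatrix} 0 & \varphi \\ X_{21} & 0 \end{pmatrix}$; (ii) if moreover $M'_s$ is invariant under all endomorphisms of $M$: $f_{e'} = \begin{pmatrix} X_{11} & \varphi \\ X_{21} & 0 \end{pmatrix}$; (iii) if moreover $M'_t$ is invariant under all endomorphisms of $M$: $f_{e'} = \begin{pmatrix} 0 & \varphi \\ X_{21} & X_{22} \end{pmatrix}$; (iv) if moreover both $M'_s$ and $M'_t$ are invariant under all endomorphisms of $M$: $f_{e'} = \begin{pmatrix} X_{11} & \varphi \\ X_{21} & X_{22} \end{pmatrix}$. Here $X_{11}, X_{21}, X_{22}$ are matrices of pairwise distinct indeterminates of the appropriate sizes, and $X$ is the set of all indeterminates appearing in $f_{e'}$.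
   Context: A representation of a quiver is a brick if its endomorphism ring is $k$. $k\langle X\rangle$ is the free associative $k$-algebra on the set $X$. A ring homomorphism $\varphi: R \to S$ is a ring epimorphism if for any two ring homomorphisms $\varrho_1, \varrho_2: S \to T$ with $\varrho_1\varphi = \varrho_2\varphi$ one has $\varrho_1 = \varrho_2$. Right $kQ$-modules are identified with representations of $Q$; an arrow $a$ acts as a matrix supported in the (rows of $M_{t(a)}$, columns of $M_{s(a)}$) block. *)

(* Defs.v *)
From HB Require Import structures.
From mathcomp Require Import all_boot all_order all_algebra.
From mathcomp Require Import monalg.
Set Implicit Arguments. Unset Strict Implicit. Unset Printing Implicit Defensive.
Import GRing.Theory.
Local Open Scope ring_scope.

Definition acyclic (V E : finType) (src tgt : E -> V) : Prop :=
  forall (a : E) (p : seq E),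
    path (fun b c => tgt b == src c) a p -> tgt (last a p) != src a.

(* (forced by the matrix conventions of the paper): a = e_t(a) a e_s(a). *)
Definition quiver_rels (V E : finType) (src tgt : E -> V) (B : pzRingType)
    (eB : V -> B) (xB : E -> B) : Prop :=
  [/\ forall v, eB v * eB v = eB v,
      forall v w, v != w -> eB v * eB w = 0,
      \sum_v eB v = 1
    & forall a, xB a = eB (tgt a) * xB a * eB (src a)].

Definition is_path_algebra (k : fieldType) (V E : finType) (src tgt : E -> V)
    (A : algType k) (e : V -> A) (x : E -> A) : Prop :=
  quiver_rels src tgt e x /\
  forall (B : pzRingType) (sigma : {rmorphism k -> B}) (eB : V -> B) (xB : E -> B),
    (forall c b, sigma c * b = b * sigma c) ->
    quiver_rels src tgt eB xB ->
    exists g : {rmorphism A -> B},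
      [/\ forall c, g (c%:A) = sigma c, forall v, g (e v) = eB v,
          forall a, g (x a) = xB a
        & forall g' : {rmorphism A -> B},
            (forall c, g' (c%:A) = sigma c) -> (forall v, g' (e v) = eB v) ->
            (forall a, g' (x a) = xB a) -> g' =1 g].

Definition ring_epi (R S : pzRingType) (f : R -> S) : Prop :=
  forall (T : pzRingType) (g h : {rmorphism S -> T}),
    (forall x, g (f x) = h (f x)) -> forall y, g y = h y.

(* Representations in coordinates.  A representation of total dimension *)
(* n is given by a fixed basis of (+)_v M_v indexed by 'I_n, a map vtx    *)
(* saying to which vertex space each basis vector belongs, and for each   *)
(* arrow a an n x n matrix Arr a (this is f_0(a)) supported in the        *)
(* (rows of M_t(a), columns of M_s(a)) block.                             *)

Definition is_rep (k : fieldType) (V E : finType) (src tgt : E -> V) (n : nat)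
    (vtx : 'I_n -> V) (Arr : E -> 'M[k]_n) : Prop :=
  forall a i j, Arr a i j != 0 -> (vtx i == tgt a) && (vtx j == src a).

Definition vdiag (k : fieldType) (V : finType) (n : nat) (vtx : 'I_n -> V) (v : V)
  : 'M[k]_n := \matrix_(i, j) ((i == j) && (vtx i == v))%:R.

Definition is_endo (k : fieldType) (V E : finType) (n : nat) (vtx : 'I_n -> V)
    (P : pred E) (Arr : E -> 'M[k]_n) (Phi : 'M[k]_n) : Prop :=
  (forall i j, vtx i != vtx j -> Phi i j = 0) /\
  (forall a, P a -> Phi *m Arr a = Arr a *m Phi).

Definition is_brick (k : fieldType) (V E : finType) (n : nat) (vtx : 'I_n -> V)
    (P : pred E) (Arr : E -> 'M[k]_n) : Prop :=
  (0 < n)%N /\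
  forall Phi, is_endo vtx P Arr Phi -> exists c : k, Phi = c%:M.

Definition span_invariant (k : fieldType) (n : nat) (lo hi : nat) (Phi : 'M[k]_n)
  : Prop :=
  forall i j : 'I_n, (lo <= j < hi)%N -> ~~ (lo <= i < hi)%N -> Phi i j = 0.

(* Entry (i, j) of a matrix with natural-number indices (0 outside). *)
Definition mxnat (R : nzRingType) (m p : nat) (M : 'M[R]_(m, p)) (i j : nat) : R :=
  match @insub _ (fun x => (x < m)%N) _ i, @insub _ (fun x => (x < p)%N) _ j with
  | Some i', Some j' => M (i' : 'I_m) (j' : 'I_p)
  | _, _ => 0
  end.

(* Layout of the adapted basis (dims: Ker = ks, M'_s = r, Im = r, M'_t = ct):*)
(*   [0, ks)            basis of Ker phi_e'         |                     *)
(*   [ks, ks+r)         basis of M'_s               |  = basis of M_s     *)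
(*   [ks+r, ks+2r)      basis of Im phi_e'          |                     *)
(*   [ks+2r, ks+2r+ct)  basis of M'_t               |  = basis of M_t     *)
(*   [ks+2r+ct, n)      bases of the remaining vertex spaces              *)

(* phi_e' = [[0, phi], [0, 0]] in these coordinates. *)
Definition edge_mx (k : fieldType) (n ks r : nat) (phi : 'M[k]_r) : 'M[k]_n :=
  \matrix_(i, j)
    if ((ks + r <= i < ks + r + r) && (ks <= j < ks + r))%N
    then mxnat phi (i - (ks + r)) (j - ks) else 0.

(* Indeterminates: (0, i, j) = entry (i,j) of X21 (ct x ks), (1, i, j) of X11 *)
(* (r x ks, present iff b1), (2, i, j) of X22 (ct x r, present iff b2).      *)
Definition fvar_ok (b1 b2 : bool) (ks r ct : nat) (x : nat * nat * nat) : bool :=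
  [|| [&& x.1.1 == 0%N, (x.1.2 < ct)%N & (x.2 < ks)%N],
      [&& x.1.1 == 1%N, b1, (x.1.2 < r)%N & (x.2 < ks)%N]
    | [&& x.1.1 == 2%N, b2, (x.1.2 < ct)%N & (x.2 < r)%N]].

Definition fvar (b1 b2 : bool) (ks r ct : nat) : choiceType :=
  {x : nat * nat * nat | fvar_ok b1 b2 ks r ct x}.

Definition freealg (k : fieldType) (X : choiceType) := {malg k[{fmonom X}]}.

(* The indeterminate (blk, i, j) as an element of k<X> (0 if not an indeterminate). *)
Definition fX (k : fieldType) (b1 b2 : bool) (ks r ct : nat) (blk i j : nat)
  : freealg k (fvar b1 b2 ks r ct) :=
  oapp (fun x => << fmu x >>) 0 (@insub _ (fvar_ok b1 b2 ks r ct) _ (blk, i, j)).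

(* The image of e': f_e' in the (rows of M_t, cols of M_s) block, with    *)
(* f_e' = [[X11 (if b1) or 0, phi], [X21, X22 (if b2) or 0]].             *)
Definition edge_image (k : fieldType) (b1 b2 : bool) (n ks r ct : nat) (phi : 'M[k]_r)
  : 'M[freealg k (fvar b1 b2 ks r ct)]_n :=
  \matrix_(i, j)
    if (ks + r <= i < ks + r + r)%N then
      if (ks <= j < ks + r)%N then (mxnat phi (i - (ks + r)) (j - ks))%:A
      else if b1 && (j < ks)%N then fX k b1 b2 ks r ct 1 (i - (ks + r)) j
      else 0
    else if (ks + r + r <= i < ks + r + r + ct)%N then
      if (j < ks)%N then fX k b1 b2 ks r ct 0 (i - (ks + r + r)) j
      else if b2 && (ks <= j < ks + r)%N then fX k b1 b2 ks r ct 2 (i - (ks + r + r)) (j - ks)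
      else 0
    else 0.

Arguments edge_mx {k} n ks r phi.
Arguments edge_image {k} b1 b2 n ks r ct phi.
Arguments vdiag k {V n} vtx v.
Arguments fX k b1 b2 ks r ct blk i j.

(* Main.v *)
Require Import Defs.
From HB Require Import structures.
From mathcomp Require Import all_boot all_order all_algebra.
From mathcomp Require Import monalg.
From mathcomp Require Import zify ring.
Import GRing.Theory.
Local Open Scope ring_scope.

Lemma sum_enum_rank (R : nmodType) (U : finType) (F : 'I_#|U| -> R) :
  \sum_(y < #|U|) F y = \sum_u F (enum_rank u).
Proof. by rewrite (reindex enum_rank) //; apply: onW_bij; apply: enum_rank_bij. Qed.

Lemma dual (k : fieldType) (J U : finType) (C : J -> U -> k) (D : U -> k) :
  (forall v : U -> k, (forall j, \sum_u C j u * v u = 0) -> \sum_u D u * v u = 0) ->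
  exists mu : J -> k, forall u, D u = \sum_j mu j * C j u.
Proof.
move=> H.
pose Cm := \matrix_(i < #|J|, x < #|U|) C (enum_val i) (enum_val x).
pose Dm := \row_(x < #|U|) D (enum_val x).
have : (Dm <= Cm)%MS.
  rewrite submxE; apply/eqP/matrixP => i x; rewrite !mxE.
  rewrite sum_enum_rank.
  under eq_bigr do rewrite mxE enum_rankK.
  apply: H => j.
  move/matrixP: (mulmx_coker Cm) => /(_ (enum_rank j) x).
  rewrite !mxE sum_enum_rank => E; rewrite -[X in _ = X]E.
  by apply: eq_bigr => u _; rewrite [Cm _ _]mxE !enum_rankK.
case/submxP => M hM.
exists (fun j => M 0 (enum_rank j)) => u.
move/matrixP: hM => /(_ 0 (enum_rank u)).
rewrite !mxE enum_rankK sum_enum_rank => ->.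
by apply: eq_bigr => j _; rewrite mxE ?enum_rankK.
Qed.

Lemma transfer (k : fieldType) (J U : finType) (C : J -> U -> k) (D : U -> k)
  (T : pzRingType) (gam : {rmorphism k -> T}) (z : U -> T) :
  (forall v : U -> k, (forall j, \sum_u C j u * v u = 0) -> \sum_u D u * v u = 0) ->
  (forall j, \sum_u gam (C j u) * z u = 0) -> \sum_u gam (D u) * z u = 0.
Proof.
move=> H HT; have [mu Hmu] := @dual k J U C D H.
under eq_bigr do rewrite Hmu rmorph_sum mulr_suml.
rewrite exchange_big big1 // => j _.
under eq_bigr do rewrite rmorphM -mulrA.
by rewrite -mulr_sumr HT mulr0.
Qed.

Section FreeAlg.
Variables (k : fieldType) (X : choiceType).
Local Notation K := (freealg k X).

Lemma malgC_alg (c : k) : c%:A = c%:MP :> K.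
Proof. by rewrite -mul_malgC mulr1. Qed.

Lemma alg_central (c : k) (b : K) : c%:A * b = b * c%:A.
Proof.
rewrite malgC_alg mul_malgC !malgM_def fgmulgU malgZ_def /fgscale.
by apply: eq_bigr => m _; rewrite mulrC mulm1.
Qed.
End FreeAlg.

Section MxId.
Variables (R : pzRingType) (n : nat).
Local Notation Eu := (@delta_mx R n n).
Lemma mxI1 (i0 p : 'I_n) (M : 'M[R]_n) :
  Eu i0 p * M = \sum_s (M p s)%:M * Eu i0 s.
Proof.
apply/matrixP => a b; rewrite !mxE summxE.
rewrite (bigD1 p) //= big1 => [|l /negPf nl]; last by rewrite !mxE nl andbF mul0r.
rewrite (bigD1 b) //= big1 => [|s /negPf ns]; last first.
  by rewrite !mxE big1 // => l _; rewrite !mxE [b == s]eq_sym ns andbF mulr0.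
rewrite !mxE !eqxx andbT !addr0.
rewrite (bigD1 a) //= big1 => [|l /negPf nl]; last by rewrite !mxE eq_sym nl mulr0n mul0r.
by rewrite !mxE !eqxx mulr1n andbT addr0; case: (a == i0); rewrite ?mulr1 ?mulr0 ?mul1r ?mul0r.
Qed.

Lemma mxI2 (i0 q : 'I_n) (M : 'M[R]_n) :
  M * Eu q i0 = \sum_r Eu r i0 * (M r q)%:M.
Proof.
apply/matrixP => a b; rewrite !mxE summxE.
rewrite (bigD1 q) //= big1 => [|l /negPf nl]; last by rewrite !mxE nl mulr0.
rewrite (bigD1 a) //= big1 => [|s /negPf ns]; last first.
  by rewrite !mxE big1 // => l _; rewrite !mxE [a == s]eq_sym ns mul0r.
rewrite !mxE !eqxx !addr0.
rewrite (bigD1 i0) //= big1 => [|l /negPf nl]; last by rewrite !mxE nl andbF mul0r.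
rewrite !mxE !eqxx /= mul1r addr0 [b == i0]eq_sym.
by case: (i0 == b); rewrite ?mulr1n ?mulr0n ?mulr1 ?mulr0.
Qed.

Lemma mxI3 (i0 : 'I_n) : 1 = \sum_p Eu p i0 * Eu i0 p :> 'M[R]_n.
Proof.
rewrite -[1]/(1%:M) mx1_sum_delta; apply: eq_bigr => p _.
by rewrite -mulmxE mul_delta_mx.
Qed.

Lemma scalar_central (a : R) (A : 'M[R]_n) :
  (forall b, a * b = b * a) -> a%:M * A = A * a%:M.
Proof.
move=> Ha; apply/matrixP => i j; rewrite !mxE.
rewrite (bigD1 i) //= big1 => [|l /negPf nl]; last by rewrite !mxE eq_sym nl mulr0n mul0r.
rewrite [RHS](bigD1 j) //= [X in _ = _ + X]big1 => [|l /negPf nl]; last by rewrite !mxE nl mulr0n mulr0.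
by rewrite !mxE !eqxx !mulr1n !addr0 Ha.
Qed.
End MxId.

Section FreeAlg2.
Variables (k : fieldType) (X : choiceType).
Local Notation K := (freealg k X).
Lemma malgU_mul (m1 m2 : fmonom X) : << mmul m1 m2 >> = << m1 >> * << m2 >> :> K.
Proof. by rewrite malgM_def fgmulUU mulr1. Qed.

Lemma freealg_ind (P : K -> Prop) : P 0 -> (forall a b, P a -> P b -> P (a + b)) ->
  (forall a b, P a -> P b -> P (a * b)) -> (forall c, P c%:A) ->
  (forall x, P << fmu x >>) -> forall y, P y.
Proof.
move=> P0 PD PM PC PX y; rewrite [y]monalgE; apply: big_ind => // m _.
have -> : << y@_m *g m >> = (y@_m)%:A * << m >> :> K.
  by rewrite malgC_alg malgM_def fgmulUU mulr1 mul1m.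
apply: (PM) => //; case: m => s; elim: s => [|x s IH].
  have -> : FMonom [::] = (mone : fmonom X) by apply/val_inj; rewrite /= fm1.
  by rewrite -[<< _ >>]/(1%:MP) mpolyC1E -(scale1r (1 : K)); apply: (PC).
have -> : FMonom (x :: s) = mmul (fmu x) (FMonom s) by apply/val_inj; rewrite /= fmM fmU.
by rewrite malgU_mul; apply: PM.
Qed.
End FreeAlg2.



Section Main.
Variables (k : fieldType) (V E : finType) (src tgt : E -> V) (e' : E)
  (ks r ct n : nat) (vtx : 'I_n -> V) (Arr : E -> 'M[k]_n) (phi : 'M[k]_r) (b1 b2 : bool).
Local Notation X := (fvar b1 b2 ks r ct).
Local Notation K := (freealg k X).
Local Notation S := ('M[K]_n).
Local Notation F := (edge_image b1 b2 n ks r ct phi).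
Local Notation mk := (fun c : k => (c%:A : K)).
Variables (T : pzRingType) (g h : {rmorphism S -> T}) (i0 : 'I_n).
Hypothesis Hsc : forall c : k, g ((c%:A : K)%:M) = h ((c%:A : K)%:M).
Local Notation Eu := (@delta_mx K n n).
Local Notation z := (fun p q => g (Eu i0 p) * h (Eu q i0)).
Local Notation gam := (g \o (scalar_mx \o in_alg K)).

Lemma gamE c : gam c = g ((c%:A : K)%:M). Proof. by []. Qed.
Lemma gsc0 : g (((0 : k)%:A : K)%:M) = 0. Proof. by rewrite -gamE rmorph0. Qed.
Lemma gsc1 : g (((1 : k)%:A : K)%:M) = 1. Proof. by rewrite -gamE rmorph1. Qed.

Lemma GL (M : S) : g M = h M -> forall p q,
  \sum_s g ((M p s)%:M) * z s q = \sum_r z p r * h ((M r q)%:M).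
Proof.
move=> HM p q.
have e1 : g (Eu i0 p * M) * h (Eu q i0) = g (Eu i0 p) * h (M * Eu q i0).
  by rewrite !rmorphM HM mulrA.
rewrite mxI1 mxI2 rmorph_sum mulr_suml rmorph_sum mulr_sumr in e1.
rewrite (eq_bigr (fun s => g ((M p s)%:M * Eu i0 s) * h (Eu q i0))); last first.
  by move=> s _; rewrite rmorphM mulrA.
rewrite e1; apply: eq_bigr => s _; by rewrite rmorphM mulrA.
Qed.

Lemma zgam c p q : gam c * z p q = z p q * gam c.
Proof.
rewrite gamE mulrA -rmorphM scalar_central; last by move=> b; exact: alg_central.
rewrite rmorphM -mulrA Hsc -rmorphM scalar_central; last by move=> b; exact: alg_central.
by rewrite rmorphM mulrA -Hsc.
Qed.

Lemma GLk (b : 'M[k]_n) : g (map_mx mk b) = h (map_mx mk b) -> forall p q,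
  \sum_s gam (b p s) * z s q = \sum_r z p r * gam (b r q).
Proof.
move=> Hb p q; have := GL _ Hb p q.
under eq_bigr do rewrite mxE.
under [in X in _ = X -> _]eq_bigr do rewrite mxE -Hsc.
exact: id.
Qed.

Hypothesis Hvd : forall v, g (map_mx mk (vdiag k vtx v)) = h (map_mx mk (vdiag k vtx v)).

Lemma zblock i j : vtx i != vtx j -> z i j = 0.
Proof.
move=> nij; have nji : vtx j != vtx i by rewrite eq_sym.
have := GLk _ (Hvd (vtx i)) i j.
rewrite (bigD1 i) // big1 => [|s /negPf ns]; last by rewrite /vdiag mxE eq_sym ns andFb mulr0n rmorph0 mul0r.
rewrite [X in _ = X](bigD1 j) // [X in _ = _ + X]big1 => [|s /negPf ns]; last by rewrite /vdiag mxE ns andFb mulr0n rmorph0 mulr0.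
rewrite /vdiag !mxE !eqxx !andTb (negPf nji) mulr1n mulr0n rmorph1 rmorph0 mul1r mulr0 !addr0.
by move=> H; rewrite -[LHS]addr0; exact: H.
Qed.

Definition cf (b : 'M[k]_n) (p q : 'I_n) (u : 'I_n * 'I_n) : k :=
  (u.1 == p)%:R * b u.2 q - (u.2 == q)%:R * b p u.1.

Lemma sum_cf (R' : pzRingType) (f : {rmorphism k -> R'}) (w : 'I_n -> 'I_n -> R') b p q :
  (forall c i j, f c * w i j = w i j * f c) ->
  \sum_u f (cf b p q u) * w u.1 u.2 = \sum_s w p s * f (b s q) - \sum_r f (b p r) * w r q.
Proof.
move=> Hc; rewrite -(pair_bigA _ (fun i j => f (cf b p (q) (i, j)) * w i j)) /=.
under eq_bigr do under eq_bigr do rewrite /cf /= rmorphB mulrBl !rmorphM.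
under eq_bigr do rewrite sumrB.
rewrite sumrB; congr (_ - _).
  rewrite (bigD1 p) //= [X in _ + X = _]big1 => [|i /negPf ni]; last first.
    by rewrite big1 // => j _; rewrite ni rmorph0 !mul0r.
  by rewrite eqxx rmorph1 addr0; apply: eq_bigr => j _; rewrite mul1r Hc.
rewrite exchange_big (bigD1 q) //= [X in _ + X = _]big1 => [|j /negPf nj]; last first.
  by rewrite big1 // => i _; rewrite nj rmorph0 !mul0r.
by rewrite eqxx rmorph1 addr0; apply: eq_bigr => i _; rewrite mul1r.
Qed.

Lemma sum_single (R' : pzRingType) (f : {rmorphism k -> R'}) (w : 'I_n -> 'I_n -> R') x :
  \sum_u f ((u == x)%:R) * w u.1 u.2 = w x.1 x.2.
Proof.
rewrite (bigD1 x) //= big1 => [|u /negPf nu]; last by rewrite nu rmorph0 mul0r.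
by rewrite eqxx rmorph1 mul1r addr0.
Qed.

Definition Ceq (P : pred E) (j : ('I_n * 'I_n) + (E * ('I_n * 'I_n))) (u : 'I_n * 'I_n) : k :=
  match j with
  | inl x => if vtx x.1 != vtx x.2 then (u == x)%:R else 0
  | inr y => if P y.1 then cf (Arr y.1) y.2.1 y.2.2 u else 0
  end.

Lemma eqs_endo P (Phi : 'M[k]_n) :
  (forall j, \sum_u Ceq P j u * Phi u.1 u.2 = 0) -> is_endo vtx P Arr Phi.
Proof.
move=> H; split.
  move=> i j nij; have := H (inl (i, j)); rewrite /= nij.
  by rewrite -(sum_single _ idfun (fun i j => Phi i j) (i, j)).
move=> a Pa; apply/matrixP => p q; have := H (inr (a, (p, q))); rewrite /= Pa.
rewrite (sum_cf _ idfun (fun i j => Phi i j)) /=; last by move=> *; rewrite mulrC.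
by move/eqP; rewrite subr_eq0 => /eqP E1; rewrite !mxE E1; apply: eq_bigr => *; rewrite mulrC.
Qed.

Definition Tgood (P : pred E) :=
  (forall i j, vtx i != vtx j -> z i j = 0) /\ (forall a, P a -> forall p q, \sum_s z p s * gam (Arr a s q) = \sum_r gam (Arr a p r) * z r q).

Lemma Tgood_eqs P : Tgood P -> forall j, \sum_u gam (Ceq P j u) * z u.1 u.2 = 0.
Proof.
case=> Hb Ha [[i j]|[a [p q]]].
  case nij: (vtx i != vtx j).
    transitivity (\sum_u gam ((u == (i, j))%:R) * z u.1 u.2); first by rewrite /Ceq /= nij.
    by rewrite (sum_single _ gam (fun i j => z i j) (i, j)) /= Hb // nij.
  by apply: big1 => u _; rewrite /Ceq /= nij gsc0 mul0r.
case Pa: (P a); last by apply: big1 => u _; rewrite /Ceq /= Pa gsc0 mul0r.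
transitivity (\sum_u gam (cf (Arr a) p q u) * z u.1 u.2); first by rewrite /Ceq /= Pa.
rewrite (sum_cf _ gam (fun i j => z i j)); last by move=> c i j; rewrite -zgam.
by rewrite Ha // subrr.
Qed.

Lemma concl P (Dm : 'I_n * 'I_n -> k) : Tgood P ->
  (forall Phi, is_endo vtx P Arr Phi -> \sum_u Dm u * Phi u.1 u.2 = 0) ->
  \sum_u gam (Dm u) * z u.1 u.2 = 0.
Proof.
move=> HT HD; apply: (@transfer k _ _ (Ceq P) Dm T gam (fun u => z u.1 u.2)); last exact: Tgood_eqs.
move=> v Hv; pose Phi := \matrix_(i, j) v (i, j).
have -> : \sum_u Dm u * v u = \sum_u Dm u * Phi u.1 u.2.
  by apply: eq_bigr => [[i j]] _; rewrite mxE.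
apply: HD; apply: eqs_endo => j; rewrite -[RHS](Hv j).
by apply: eq_bigr => [[i j']] _; rewrite mxE.
Qed.

Lemma zinv P i j : Tgood P -> (forall Phi, is_endo vtx P Arr Phi -> Phi i j = 0) -> z i j = 0.
Proof.
move=> HT H.
have := concl P (fun u => (u == (i, j))%:R) HT.
rewrite (sum_single _ gam (fun i j => z i j) (i, j)); apply.
move=> Phi HP; rewrite (sum_single _ idfun (fun i j => Phi i j) (i, j)) /=.
exact: H.
Qed.

Hypothesis Harr : forall a, a != e' -> g (map_mx mk (Arr a)) = h (map_mx mk (Arr a)).
Hypothesis HF : g F = h F.
Hypothesis Hs : forall i : 'I_n, (vtx i == src e') = (i < ks + r)%N.
Hypothesis He' : Arr e' = edge_mx n ks r phi.
Hypothesis HKer : forall Phi, is_endo vtx (predC1 e') Arr Phi -> span_invariant 0 ks Phi.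
Hypothesis HIm : forall Phi, is_endo vtx (predC1 e') Arr Phi ->
           span_invariant (ks + r) (ks + r + r) Phi.
Hypothesis Hb1 : b1 -> forall Phi, is_endo vtx (predC1 e') Arr Phi ->
           span_invariant ks (ks + r) Phi.
Hypothesis Hb2 : b2 -> forall Phi, is_endo vtx (predC1 e') Arr Phi ->
           span_invariant (ks + r + r) (ks + r + r + ct) Phi.

Lemma TgoodQ : Tgood (predC1 e').
Proof.
split; first exact: zblock.
move=> a /= nae p q; have := GLk _ (Harr a nae) p q => E1.
exact: (esym E1).
Qed.

Lemma zKer (i j : 'I_n) : (j < ks)%N -> ~~ (i < ks)%N -> z i j = 0.
Proof.
move=> hj hi; apply: (zinv (predC1 e') i j TgoodQ) => Phi HP.
by apply: (HKer Phi HP) => //.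
Qed.

Lemma zIm (i j : 'I_n) : (ks + r <= j < ks + r + r)%N -> ~~ (ks + r <= i < ks + r + r)%N -> z i j = 0.
Proof.
move=> hj hi; apply: (zinv (predC1 e') i j TgoodQ) => Phi HP.
exact: (HIm Phi HP).
Qed.

Lemma z1 (i j : 'I_n) : b1 -> (ks <= j < ks + r)%N -> ~~ (ks <= i < ks + r)%N -> z i j = 0.
Proof.
move=> hb hj hi; apply: (zinv (predC1 e') i j TgoodQ) => Phi HP.
exact: (Hb1 hb Phi HP).
Qed.

Lemma z2 (i j : 'I_n) : b2 -> (ks + r + r <= j < ks + r + r + ct)%N ->
  ~~ (ks + r + r <= i < ks + r + r + ct)%N -> z i j = 0.
Proof.
move=> hb hj hi; apply: (zinv (predC1 e') i j TgoodQ) => Phi HP.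
exact: (Hb2 hb Phi HP).
Qed.

Lemma gK0 : g ((0 : K)%:M) = 0.
Proof. by rewrite raddf0 rmorph0. Qed.
Lemma hK0 : h ((0 : K)%:M) = 0.
Proof. by rewrite raddf0 rmorph0. Qed.

Lemma ArrE p q : \sum_s z p s * gam (Arr e' s q) = \sum_r gam (Arr e' p r) * z r q.
Proof.
rewrite He'.
have [/andP [pIm qS] | nPQ] := boolP ((ks + r <= p < ks + r + r)%N && (ks <= q < ks + r)%N).
  have GF := GL _ HF p q.
  have L s : g ((F p s)%:M) * z s q = gam (edge_mx n ks r phi p s) * z s q.
    rewrite /edge_image /edge_mx !mxE pIm /=.
    have [hs|hs] := boolP (ks <= s < ks + r)%N; first by [].
    rewrite gsc0; have [/andP [hb hsk]|b1s] := boolP (b1 && (s < ks)%N).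
      by rewrite z1 // ?mulr0 ?mul0r //; apply/negP => /andP [? ?]; lia.
    by rewrite ?(negPf b1s) gK0 !mul0r.
  have R s : z p s * h ((F s q)%:M) = z p s * gam (edge_mx n ks r phi s q).
    rewrite /edge_image /edge_mx !mxE qS andbT.
    have [hs|hs] := boolP (ks + r <= s < ks + r + r)%N; first by rewrite -Hsc.
    rewrite rmorph0; case: ifP => h2; last by rewrite hK0.
    have -> : (q < ks)%N = false by lia.
    case/orP: (orbN b2) => hb; last by rewrite (@ifN _ b2) // hK0.
    by rewrite (@ifT _ b2) // z2 // ?mul0r //; apply/negP => /andP [? ?]; lia.
  transitivity (\sum_s z p s * h ((F s q)%:M)).
    by apply: eq_bigr => s _; rewrite R.
  rewrite -GF; apply: eq_bigr => s _; by rewrite L.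
rewrite !big1 // => s _; rewrite /edge_mx mxE.
  case: ifP => [/andP [pIm sS] | _]; last by rewrite rmorph0 mul0r.
  have qS : ~~ (ks <= q < ks + r)%N by move: nPQ; rewrite pIm.
  have [qk|qk] := boolP (q < ks)%N.
    by rewrite zKer // ?mulr0 //; apply/negP => ?; lia.
  rewrite zblock ?mulr0 //; apply/negP => /eqP E1.
  have h1 := Hs q; have h2 := Hs s; rewrite E1 in h2.
  have hs : (s < ks + r)%N by case/andP: sS.
  rewrite hs in h2; rewrite h2 in h1.
  have hq : (q < ks + r)%N by rewrite -h1.
  lia.
case: ifP => [/andP [sIm qS] | _]; last by rewrite rmorph0 mulr0.
have pIm : ~~ (ks + r <= p < ks + r + r)%N by move: nPQ; rewrite qS andbT.
by rewrite zIm // mul0r.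
Qed.

Hypothesis Hbrick : is_brick vtx predT Arr.
Hypothesis Hn : (ks + r + r + ct <= n)%N.

Lemma TgoodT : Tgood predT.
Proof.
split; first exact: zblock.
move=> a _ p q; have [->|nae] := eqVneq a e'; first exact: ArrE.
exact: (TgoodQ.2 a nae p q).
Qed.

Lemma zoff p q : p != q -> z p q = 0.
Proof.
move=> npq; apply: (zinv predT p q TgoodT) => Phi HP.
have [c ->] := Hbrick.2 Phi HP.
by rewrite mxE (negPf npq) mulr0n.
Qed.

Lemma zdiag p : z p p = z i0 i0.
Proof.
have H : \sum_u gam ((u == (p, p))%:R - (u == (i0, i0))%:R) * z u.1 u.2 = 0.
  apply: (concl predT _ TgoodT) => Phi HP.
  under eq_bigr do rewrite mulrBl.
  rewrite sumrB (sum_single _ idfun (fun i j => Phi i j) (p, p)).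
  rewrite (sum_single _ idfun (fun i j => Phi i j) (i0, i0)) /=.
  have [c ->] := Hbrick.2 Phi HP.
  by rewrite !mxE !eqxx subrr.
apply/eqP; rewrite -subr_eq0; apply/eqP; rewrite -[RHS]H.
have Sp := sum_single _ gam (fun i j => z i j) (p, p).
have Si := sum_single _ gam (fun i j => z i j) (i0, i0).
rewrite -[z p p]Sp -[z i0 i0]Si -sumrB.
by apply: eq_bigr => u _; rewrite rmorphB mulrBl.
Qed.

Lemma sum1 (w : 'I_n -> T) q : (forall s, s != q -> w s = 0) -> \sum_s w s = w q.
Proof.
move=> H; rewrite (bigD1 q) // big1; first exact: addr0.
by move=> s ns; apply: H.
Qed.

Lemma zeta_F p q : g ((F p q)%:M) * z i0 i0 = z i0 i0 * h ((F p q)%:M).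
Proof.
have H := GL _ HF p q.
rewrite (sum1 _ q) in H; last by move=> s ns; rewrite zoff ?mulr0.
rewrite (sum1 _ p) in H; last by move=> s ns; rewrite zoff ?mul0r // eq_sym.
by rewrite (zdiag q) (zdiag p) in H.
Qed.

Lemma Fx (x : X) : exists p q, F p q = << fmu x >>.
Proof.
case: x => [[[blk i] j] ok].
have EX : << fmu (exist _ ((blk, i), j) ok : X) >> = fX k b1 b2 ks r ct blk i j.
  by rewrite /fX (insubT (fvar_ok b1 b2 ks r ct) ok).
rewrite EX; move: (ok); rewrite /fvar_ok /= => /or3P [/and3P [/eqP b0 hi hj]|/and4P [/eqP b0 hb hi hj]|/and4P [/eqP b0 hb hi hj]].
- have hp : (ks + r + r + i < n)%N by lia.
  have hq : (j < n)%N by lia.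
  exists (Ordinal hp), (Ordinal hq); rewrite b0 /edge_image mxE.
  rewrite (@ifF _ (ks + r <= ks + r + r + i < ks + r + r)%N); last by apply/negbTE/negP => /andP [? ?]; lia.
  rewrite (@ifT _ (ks + r + r <= ks + r + r + i < ks + r + r + ct)%N); last by apply/andP; split; lia.
  rewrite (@ifT _ (j < ks)%N) //.
  by have -> : (ks + r + r + i - (ks + r + r))%N = i by lia.
- have hp : (ks + r + i < n)%N by lia.
  have hq : (j < n)%N by lia.
  exists (Ordinal hp), (Ordinal hq); rewrite b0 /edge_image mxE.
  rewrite (@ifT _ (ks + r <= ks + r + i < ks + r + r)%N); last by apply/andP; split; lia.
  rewrite (@ifF _ (ks <= j < ks + r)%N); last by apply/negbTE/negP => /andP [? ?]; lia.
  rewrite (@ifT _ (b1 && (j < ks)%N)); last by rewrite hb hj.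
  by have -> : (ks + r + i - (ks + r))%N = i by lia.
- have hp : (ks + r + r + i < n)%N by lia.
  have hq : (ks + j < n)%N by lia.
  exists (Ordinal hp), (Ordinal hq); rewrite b0 /edge_image mxE.
  rewrite (@ifF _ (ks + r <= ks + r + r + i < ks + r + r)%N); last by apply/negbTE/negP => /andP [? ?]; lia.
  rewrite (@ifT _ (ks + r + r <= ks + r + r + i < ks + r + r + ct)%N); last by apply/andP; split; lia.
  rewrite (@ifF _ (ks + j < ks)%N); last by apply/negbTE/negP; lia.
  rewrite (@ifT _ (b2 && (ks <= ks + j < ks + r)%N)); last by rewrite hb /=; apply/andP; split; lia.
  have -> : (ks + r + r + i - (ks + r + r))%N = i by lia.
  by have -> : (ks + j - ks)%N = j by lia.
Qed.

Lemma QK (y : K) : g (y%:M) * z i0 i0 = z i0 i0 * h (y%:M).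
Proof.
move: y; apply: (freealg_ind k X (fun y : K => g (y%:M) * z i0 i0 = z i0 i0 * h (y%:M))).
- by rewrite gK0 hK0 mul0r mulr0.
- move=> a b Ha Hb.
  have sD : (a + b)%:M = a%:M + b%:M :> S by exact: raddfD.
  by rewrite sD !rmorphD mulrDl mulrDr Ha Hb.
- move=> a b Ha Hb.
  have sM : (a * b)%:M = a%:M * b%:M :> S by rewrite scalar_mxM mulmxE.
  by rewrite sM !rmorphM -mulrA Hb mulrA Ha -mulrA.
- move=> c; rewrite -Hsc; exact: zgam.
- move=> x; have [p [q <-]] := Fx x; exact: zeta_F.
Qed.

Lemma one_eq : \sum_p g (Eu p i0) * z i0 i0 * h (Eu i0 p) = 1.
Proof.
transitivity (g 1 * h 1); last by rewrite !rmorph1 mulr1.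
rewrite (mxI3 K n i0) !rmorph_sum mulr_suml; apply: eq_bigr => p _.
rewrite mulr_sumr (sum1 _ p); last first.
  by move=> q nq; rewrite !rmorphM mulrA -(mulrA (g _)) zoff 1?eq_sym // mulr0 mul0r.
by rewrite -(zdiag p) !rmorphM !mulrA.
Qed.

Lemma geqh (y : S) : g y = h y.
Proof.
rewrite -[g y]mulr1 -one_eq mulr_sumr.
transitivity (\sum_p g (y * Eu p i0) * z i0 i0 * h (Eu i0 p)).
  by apply: eq_bigr => p _; rewrite rmorphM !mulrA.
under eq_bigr => p _ do rewrite (mxI2 K n i0 p y) rmorph_sum !mulr_suml.
have e p l : g (Eu l i0 * (y l p)%:M) * z i0 i0 * h (Eu i0 p) =
    g (Eu l i0) * z i0 i0 * h ((y l p)%:M * Eu i0 p).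
  by rewrite !rmorphM -(mulrA (g (Eu l i0))) QK !mulrA.
under eq_bigr => p _ do under eq_bigr => l _ do rewrite e.
rewrite exchange_big /=.
under eq_bigr => l _ do rewrite -mulr_sumr -rmorph_sum -(mxI1 K n i0 l y) rmorphM mulrA.
by rewrite -mulr_suml one_eq mul1r.
Qed.

End Main.

Section Dg.
Variables (R : pzRingType) (V : finType) (n : nat) (vtx : 'I_n -> V).
Definition Dg v : 'M[R]_n := \matrix_(i, j) ((i == j) && (vtx i == v))%:R.

Lemma DgMl v (M : 'M[R]_n) i j : (Dg v * M) i j = (vtx i == v)%:R * M i j.
Proof.
rewrite -mulmxE mxE (bigD1 i) //= big1 => [|l /negPf nl]; last by rewrite mxE eq_sym nl mul0r.
by rewrite mxE eqxx /= addr0.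
Qed.

Lemma DgMr v (M : 'M[R]_n) i j : (M * Dg v) i j = M i j * (vtx j == v)%:R.
Proof.
rewrite -mulmxE mxE (bigD1 j) //= big1 => [|l /negPf nl]; last by rewrite mxE nl mulr0.
by rewrite mxE eqxx /= addr0.
Qed.

Lemma Dg_idem v : Dg v * Dg v = Dg v.
Proof.
apply/matrixP => i j; rewrite DgMl mxE.
by case: (vtx i == v); case: (i == j); rewrite /= ?mul1r ?mul0r.
Qed.

Lemma Dg_orth v w : v != w -> Dg v * Dg w = 0.
Proof.
move=> nvw; apply/matrixP => i j; rewrite DgMl !mxE.
have [eiv|niv] := eqVneq (vtx i) v; last by rewrite mulr0n mul0r.
by rewrite eiv (negPf nvw) andbF mulr0n mulr0.
Qed.

Lemma Dg_sum : \sum_v Dg v = 1.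
Proof.
apply/matrixP => i j; rewrite summxE !mxE.
rewrite (bigD1 (vtx i)) //= big1 => [|v nv]; last by rewrite mxE [vtx i == _]eq_sym (negPf nv) andbF.
by rewrite mxE eqxx andbT addr0.
Qed.

Lemma Dg_support v w (M : 'M[R]_n) :
  (forall i j, M i j != 0 -> (vtx i == v) && (vtx j == w)) -> M = Dg v * M * Dg w.
Proof.
move=> H; apply/matrixP => i j; rewrite DgMr DgMl.
have [/eqP ->|nz] := boolP (M i j == 0); first by rewrite !mulr0 mul0r.
by case/andP: (H i j nz) => -> ->; rewrite mul1r mulr1.
Qed.
End Dg.
Theorem mainTheorem13
  (k : closedFieldType)
  (V E : finType) (src tgt : E -> V) (e' : E)
  (Hacyc : acyclic src tgt)
  (A : algType k) (eA : V -> A) (xA : E -> A)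
  (HA : is_path_algebra src tgt eA xA)
  (ks r ct n : nat) (vtx : 'I_n -> V) (Arr : E -> 'M[k]_n) (phi : 'M[k]_r)
  (Hn : (ks + r + r + ct <= n)%N)
  (Hs : forall i : 'I_n, (vtx i == src e') = (i < ks + r)%N)
  (Ht : forall i : 'I_n, (vtx i == tgt e') = (ks + r <= i < ks + r + r + ct)%N)
  (Hrep : is_rep src tgt vtx Arr)
  (He' : Arr e' = edge_mx n ks r phi)
  (Hphi : phi \in unitmx)
  (Hnotfull : (r < minn (ks + r) (r + ct))%N)
  (Hbrick : is_brick vtx predT Arr)
  (HKer : forall Phi, is_endo vtx (predC1 e') Arr Phi -> span_invariant 0 ks Phi)
  (HIm : forall Phi, is_endo vtx (predC1 e') Arr Phi ->
           span_invariant (ks + r) (ks + r + r) Phi)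
  (b1 b2 : bool)
  (Hb1 : b1 -> forall Phi, is_endo vtx (predC1 e') Arr Phi ->
           span_invariant ks (ks + r) Phi)
  (Hb2 : b2 -> forall Phi, is_endo vtx (predC1 e') Arr Phi ->
           span_invariant (ks + r + r) (ks + r + r + ct) Phi) :
  exists f : {rmorphism A -> 'M[freealg k (fvar b1 b2 ks r ct)]_n},
    [/\ forall c : k, f (c%:A) = (c%:A)%:M,
        forall v, f (eA v) = map_mx (fun c : k => c%:A) (vdiag k vtx v),
        forall a, a != e' -> f (xA a) = map_mx (fun c : k => c%:A) (Arr a),
        f (xA e') = edge_image b1 b2 n ks r ct phi
      & ring_epi f].
Proof.
set K := freealg k (fvar b1 b2 ks r ct).
have n0 : (0 < n)%N := Hbrick.1.
pose i0 := Ordinal n0.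
pose sigma : {rmorphism k -> 'M[K]_n} := scalar_mx \o in_alg K.
pose eB v : 'M[K]_n := map_mx (fun c : k => c%:A) (vdiag k vtx v).
pose xB a : 'M[K]_n := if a == e' then edge_image b1 b2 n ks r ct phi
                       else map_mx (fun c : k => c%:A) (Arr a).
have eBE v : eB v = Dg K V n vtx v.
  by apply/matrixP => i j; rewrite !mxE scaler_nat.
have Hcen : forall c b, sigma c * b = b * sigma c.
  by move=> c b; apply: scalar_central => y; exact: alg_central.
have Hrels : quiver_rels src tgt eB xB.
  split.
  - by move=> v; rewrite eBE Dg_idem.
  - by move=> v w nvw; rewrite !eBE Dg_orth.
  - by under eq_bigr do rewrite eBE; exact: Dg_sum.
  move=> a; rewrite !eBE; apply: Dg_support => i j.
  have [->|nae] := eqVneq a e'.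
    rewrite /xB eqxx /edge_image mxE Ht Hs.
    case: ifP => [hi|_].
      case: ifP => [hj|_]; first by move=> _; apply/andP; split; lia.
      case: ifP => [/andP [_ hj] _|_]; last by rewrite eqxx.
      by apply/andP; split; lia.
    case: ifP => [hi|_]; last by rewrite eqxx.
    case: ifP => [hj _|_]; first by apply/andP; split; lia.
    case: ifP => [/andP [_ /andP [_ hj]] _|_]; last by rewrite eqxx.
    by apply/andP; split; lia.
  rewrite /xB (negPf nae) mxE => nz; apply: Hrep.
  by apply: contra nz => /eqP ->; rewrite scale0r.
have [f [f1 f2 f3 f4]] := HA.2 _ sigma eB xB Hcen Hrels.
exists f; split => //.
- by move=> a nae; rewrite f3 /xB (negPf nae).
- by rewrite f3 /xB eqxx.
move=> T g h H.
apply: (geqh k V E src e' ks r ct n vtx Arr phi b1 b2 T g h i0) => //.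
- by move=> c; have := H (c%:A); rewrite f1.
- by move=> v; have := H (eA v); rewrite f2.
- by move=> a nae; have := H (xA a); rewrite f3 /xB (negPf nae).
- by have := H (xA e'); rewrite f3 /xB eqxx.
Qed.
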